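(* Consider the patient model in the context with actions from an $(r,k)$-exploratory policy over a trajectory of length $T$, and let $N_i:=\sum_{t=1}^T\mathbf 1_{\{u_t=e_i\}}$. Let $\mathcal E_N(r,T,k)$ be the event $\{N_i>\frac{r(T-k)}{2(M+1)}\text{ for all }i=1,\dots,M\}$. Then for $\delta\in(0,1)$, $\mathbf P(\mathcal E_N(r,T,k))\geq1-\delta$ whenever $T\geq k+\frac8r(M+1)\log(M/\delta)$.
   Context: Patient model: $M\geq1$ treatments; $\mathcal U:=\{v\in\{0,1\}^M:\|v\|_0\leq1\}$ (so $|\mathcal U|=M+1$), $e_i$ basis vectors. $x_{t+1}=ax_t+b^\top u_t+c^\top d_t+w_t$, adherence $d^i_t\mid x_t,u^i_t\sim\mathrm{Bernoulli}(u^i_t\sigma(x_t+\mu_i))$, $\sigma$ the sigmoid; $x_1$ distributed as the noise. Parameters $a\in[0,\bar a]$ (known $\bar a\in(0,1)$), $\|b\|_\infty\leq\bar b$, $\|c\|_\infty\leq\bar c$, $\mu\in[-\bar\mu,\bar\mu]^M$. $x_t,u_t,d_t$ fully observed. Noise i.i.d., zero-symmetric, $\sigma_s^2$-subgaussian, bounded by $\bar w>0$, log-concave density, known variance. With $\mathcal F_t:=\sigma(x_{0:t},u_{0:t},d_{0:t},w_{0:t})$, an $(r,k)$-exploratory policy ($r\in(0,1]$, $k\in\mathbb N$) is one that in every block $\{j+1,\dots,j+k\}$, $j\geq0$, almost surely takes at least $\lceil rk\rceil$ actions drawn uniformly from $\mathcal U$ independently of $\mathcal F_{t-1}$. *)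

(* Defs.v *)
From HB Require Import structures.
From mathcomp Require Import all_boot all_order all_algebra.
From mathcomp Require Import all_classical all_reals all_analysis.
Set Implicit Arguments. Unset Strict Implicit. Unset Printing Implicit Defensive.
Import Order.TTheory GRing.Theory Num.Theory.
Local Open Scope classical_set_scope.
Local Open Scope ring_scope.

Definition bvec (M : nat) := {ffun 'I_M -> bool}.

Definition Uset (M : nat) : {set bvec M} :=
  finset (fun v : bvec M => (#|[pred i | v i]| <= 1)%N).

Definition evec (M : nat) (i : 'I_M) : bvec M := [ffun j => j == i].

Definition hist_gen d (Omega : measurableType d) (R : realType) (M : nat)
    (x w : nat -> Omega -> R) (u dd : nat -> Omega -> bvec M) (s : nat)
    : set (set Omega) :=
  [set A | exists n, (n <= s)%N /\
     ((exists B : set R, measurable B /\ A = x n @^-1` B) \/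
      (exists B : set R, measurable B /\ A = w n @^-1` B) \/
      (exists B : set (bvec M), A = u n @^-1` B) \/
      (exists B : set (bvec M), A = dd n @^-1` B))].

Definition hist d (Omega : measurableType d) (R : realType) (M : nat)
    (x w : nat -> Omega -> R) (u dd : nat -> Omega -> bvec M) (s : nat)
    : set (set Omega) :=
  <<s hist_gen x w u dd s >>.

(* (r,k)-exploratory policy.  xi t w = true means that the action at time t
   is an exploratory one, i.e. drawn uniformly from U independently of
   F_{t-1}; the decision to explore at time t is F_{t-1}-measurable
   (a deterministic schedule being a special case). *)
Definition exploratory d (Omega : measurableType d) (R : realType)
    (P : probability Omega R) (M : nat)
    (x w : nat -> Omega -> R) (u dd : nat -> Omega -> bvec M)
    (xi : nat -> Omega -> bool) (r : R) (k : nat) : Prop :=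
  (forall t : nat, (0 < t)%N ->
     hist x w u dd t.-1 [set om | xi t om] /\
     (forall (A : set Omega) (v : bvec M), hist x w u dd t.-1 A ->
        v \in Uset M ->
        P (A `&` [set om | xi t om] `&` u t @^-1` [set v]) =
        (P (A `&` [set om | xi t om]) * ((#|Uset M|%:R)^-1)%:E)%E)) /\
  (forall j : nat, {ae P, forall om,
     (Num.ceil (r * k%:R) <=
       (\sum_(j.+1 <= t < j + k + 1) (xi t om : nat))%N%:Z)%R}).

Definition Ncount (M : nat) Omega (u : nat -> Omega -> bvec M) (T : nat)
    (i : 'I_M) (om : Omega) : nat :=
  (\sum_(1 <= t < T.+1) (u t om == evec i : nat))%N.

Definition E_N (R : realType) (M : nat) Omega (u : nat -> Omega -> bvec M)
    (r : R) (T k : nat) : set Omega :=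
  [set om | forall i : 'I_M,
     r * (T%:R - k%:R) / (2 * (M%:R + 1)) < (Ncount u T i om)%:R].

(* Main.v *)
Require Import Defs.
From HB Require Import structures.
From mathcomp Require Import all_boot all_order all_algebra.
From mathcomp Require Import all_classical all_reals all_analysis.
From mathcomp Require Import ring lra.
Import Order.TTheory GRing.Theory Num.Theory.
Local Open Scope classical_set_scope.
Local Open Scope ring_scope.


Section Prob.
Context {R : realType} {d : measure_display} {T : measurableType d}.
Variable P : probability T R.

Definition pr (A : set T) : R := fine (P A).

Lemma prE A : measurable A -> P A = (pr A)%:E.
Proof.
move=> mA; rewrite /pr fineK // ge0_fin_numE ?measure_ge0 //.
exact: (le_lt_trans (probability_le1 P mA) (ltry _)).
Qed.

Lemma pr_ge0 A : 0 <= pr A.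
Proof. exact/fine_ge0/measure_ge0. Qed.

Lemma pr_le1 A : measurable A -> pr A <= 1.
Proof. by move=> mA; have := probability_le1 P mA; rewrite prE // lee_fin. Qed.

Lemma prT : pr setT = 1.
Proof. by rewrite /pr probability_setT. Qed.

Lemma pr0 : pr set0 = 0.
Proof. by rewrite /pr measure0. Qed.

Lemma prU A B : measurable A -> measurable B -> A `&` B = set0 ->
  pr (A `|` B) = pr A + pr B.
Proof.
move=> mA mB AB; apply: EFin_inj; rewrite EFinD -!prE ?measurableU //.
by apply: measureU.
exact: measurableU.
Qed.

Lemma pr_le A B : measurable A -> measurable B -> A `<=` B -> pr A <= pr B.
Proof.
move=> mA mB AB; rewrite -lee_fin -!prE //.
exact: le_measure (mem_set mA) (mem_set mB) AB.
Qed.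

Lemma pr_split A B : measurable A -> measurable B ->
  pr A = pr (A `&` B) + pr (A `&` ~` B).
Proof.
move=> mA mB; rewrite -prU.
- by rewrite -setIUr setUv setIT.
- exact: measurableI.
- exact: measurableI mA (measurableC mB).
- by rewrite setIACA setICr setI0.
Qed.

Lemma pr_subU A B : measurable A -> measurable B -> pr (A `|` B) <= pr A + pr B.
Proof.
move=> mA mB.
have -> : A `|` B = A `|` (B `&` ~` A).
  by rewrite setUIr setUv setIT.
have mBA : measurable (B `&` ~` A) by exact: measurableI mB (measurableC mA).
rewrite prU //; last first.
  by rewrite setIA (setIC A) -setIA setICr setI0.
by rewrite lerD2l; apply: pr_le => //; exact: subIsetl.
Qed.

Lemma pr_compl A : measurable A -> pr (~` A) = 1 - pr A.
Proof.
move=> mA; rewrite -prT (@pr_split setT A measurableT mA) !setTI; ring.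
Qed.

End Prob.

Definition csum {T : Type} (Y : nat -> T -> bool) (t : nat) (om : T) : nat :=
  (\sum_(1 <= s < t.+1) (Y s om : nat))%N.

Lemma csum0 {T : Type} (Y : nat -> T -> bool) om : csum Y 0 om = 0%N.
Proof. by rewrite /csum big_geq. Qed.

Lemma csumS {T : Type} (Y : nat -> T -> bool) t om :
  csum Y t.+1 om = (csum Y t om + Y t.+1 om)%N.
Proof. by rewrite /csum big_nat_recr. Qed.

Lemma csum_le {T : Type} (Y : nat -> T -> bool) t om : (csum Y t om <= t)%N.
Proof.
elim: t => [|t IH]; first by rewrite csum0.
rewrite csumS; case: (Y t.+1 om) => /=; first by rewrite addn1 ltnS.
by rewrite addn0 leqW.
Qed.

Lemma csum_meas {d} {T : measurableType d} (Y : nat -> T -> bool) t :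
  (forall s, (0 < s)%N -> (s <= t)%N -> measurable [set om | Y s om]) ->
  forall a, measurable [set om | csum Y t om = a].
Proof.
elim: t => [|t IH] hY a.
  case: a => [|a].
    by rewrite (_ : [set _ | _] = setT) //; apply/seteqP; split=> om //= _; rewrite csum0.
  by rewrite (_ : [set _ | _] = set0) //; apply/seteqP; split=> om //=; rewrite csum0.
have IH' : forall a, measurable [set om | csum Y t om = a].
  by apply: IH => s s0 st; apply: hY => //; exact: leqW.
have mY : measurable [set om | Y t.+1 om] by exact: hY.
case: a => [|a].
  rewrite (_ : [set _ | _] = [set om | csum Y t om = 0%N] `&` ~` [set om | Y t.+1 om]).
    exact: measurableI (IH' _) (measurableC mY).
  apply/seteqP; split=> om /=; rewrite csumS; case: (Y t.+1 om) => /=;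
    rewrite ?addn1 ?addn0 //; by move=> [].
rewrite (_ : [set _ | _] = ([set om | csum Y t om = a.+1] `&` ~` [set om | Y t.+1 om])
   `|` ([set om | csum Y t om = a] `&` [set om | Y t.+1 om])).
  by apply: measurableU; apply: measurableI => //; exact: measurableC.
apply/seteqP; split=> om /=; rewrite csumS; case: (Y t.+1 om) => /=;
  rewrite ?addn1 ?addn0.
- by move=> [] ->; right.
- by move=> ->; left.
- by case=> -[] // -> _.
- by case=> -[] // ->.
Qed.

Lemma preim_nat_meas {d} {T : measurableType d} (f : T -> nat) (B : set nat) :
  (forall a, measurable [set om | f om = a]) -> measurable (f @^-1` B).
Proof.
move=> hf.
rewrite (_ : f @^-1` B = \bigcup_(a in B) [set om | f om = a]).
  by apply: bigcup_measurable => a _; exact: hf.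
apply/seteqP; split=> om /=.
  by move=> Bf; exists (f om).
by case=> a Ba ->.
Qed.


Section Prob2.
Context {R : realType} {d : measure_display} {T : measurableType d}.
Variable P : probability T R.

Lemma pr_partition (f : T -> nat) n B : measurable B ->
  (forall a, measurable [set om | f om = a]) -> (forall om, (f om < n)%N) ->
  pr P B = \sum_(0 <= a < n) pr P (B `&` [set om | f om = a]).
Proof.
move=> mB hf hn.
suff H : forall m, pr P (B `&` [set om | (f om < m)%N]) =
    \sum_(0 <= a < m) pr P (B `&` [set om | f om = a]).
  rewrite -H; congr pr; apply/seteqP; split=> om /=; first by move=> Bo; split.
  by case.
elim=> [|m IH].
  rewrite big_geq // (_ : _ `&` _ = set0) ?pr0 //.
  by apply/seteqP; split=> om //= -[].
rewrite big_nat_recr //= -IH -prU.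
- congr pr; apply/seteqP; split=> om /=.
    by case=> Bo; rewrite ltnS leq_eqVlt => /orP[/eqP ->|->]; [right|left].
  by case=> -[Bo h]; split=> //; [exact: leqW| rewrite h].
- by apply: measurableI => //; exact: (@preim_nat_meas _ _ f [set a | (a < m)%N] hf).
- exact: measurableI.
- apply/seteqP; split=> om //= -[[_ h1] [_ h2]].
  by rewrite h2 ltnn in h1.
Qed.

Lemma pr_union_le (I : eqType) (r : seq I) (F : I -> set T) :
  (forall i, measurable (F i)) ->
  measurable [set om | exists2 i, i \in r & F i om] /\
  pr P [set om | exists2 i, i \in r & F i om] <= \sum_(i <- r) pr P (F i).
Proof.
move=> hF; elim: r => [|i r [IHm IHp]].
  rewrite big_nil (_ : [set _ | _] = set0) ?pr0 //.
  by apply/seteqP; split=> om //= -[].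
have -> : [set om | exists2 j, j \in i :: r & F j om] =
    F i `|` [set om | exists2 j, j \in r & F j om].
  apply/seteqP; split=> om /=.
    case=> j; rewrite in_cons => /orP[/eqP ->|jr Fj]; first by left.
    by right; exists j.
  case=> [Fi|[j jr Fj]]; first by exists i; rewrite ?mem_head.
  by exists j; rewrite // in_cons jr orbT.
split; first exact: measurableU.
rewrite big_cons; apply: le_trans; first exact: (pr_subU P _ _ (hF i) IHm).
by rewrite lerD2l.
Qed.

End Prob2.


Section Model.
Variables (R : realType) (d : measure_display) (Omega : measurableType d)
  (P : probability Omega R) (M : nat) (x w : nat -> Omega -> R)
  (u dd : nat -> Omega -> bvec M) (xi : nat -> Omega -> bool).
Hypothesis hx : forall n, measurable_fun setT (x n).
Hypothesis hw : forall n, measurable_fun setT (w n).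
Hypothesis hu : forall n (v : bvec M), measurable (u n @^-1` [set v]).
Hypothesis hdd : forall n (v : bvec M), measurable (dd n @^-1` [set v]).
Hypothesis hxi : forall t : nat, (0 < t)%N ->
     hist x w u dd t.-1 [set om | xi t om] /\
     (forall (A : set Omega) (v : bvec M), hist x w u dd t.-1 A ->
        v \in Uset M ->
        P (A `&` [set om | xi t om] `&` u t @^-1` [set v]) =
        (P (A `&` [set om | xi t om]) * ((#|Uset M|%:R)^-1)%:E)%E).

Local Notation H := (hist x w u dd).

Lemma fin_preim_meas (f : Omega -> bvec M) (B : set (bvec M)) :
  (forall v, measurable (f @^-1` [set v])) -> measurable (f @^-1` B).
Proof.
move=> hf; rewrite (_ : f @^-1` B = \bigcup_(v in B) f @^-1` [set v]).
  by apply: fin_bigcup_measurable; [exact: finite_finset| move=> v _; exact: hf].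
apply/seteqP; split=> om /=; first by move=> Bf; exists (f om).
by case=> v Bv /= ->.
Qed.

Lemma hist_gen_meas s A : hist_gen x w u dd s A -> measurable A.
Proof.
case=> n [_ [[B [mB ->]]|[[B [mB ->]]|[[B ->]|[B ->]]]]].
- by rewrite -(setTI (_ @^-1` _)); exact: hx.
- by rewrite -(setTI (_ @^-1` _)); exact: hw.
- exact: fin_preim_meas.
- exact: fin_preim_meas.
Qed.

Lemma hist_meas s A : H s A -> measurable A.
Proof.
apply: smallest_sub; first exact: sigma_algebra_measurable.
exact: hist_gen_meas.
Qed.

Lemma hist_mono s s' A : (s <= s')%N -> H s A -> H s' A.
Proof.
move=> ss'; apply: sub_sigma_algebra2 => B [n [ns HB]].
by exists n; split=> //; exact: leq_trans ns ss'.
Qed.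

Lemma xi_meas t : (0 < t)%N -> measurable [set om | xi t om].
Proof. by move=> t0; apply: (@hist_meas t.-1); case: (hxi _ t0). Qed.

Variable i : 'I_M.
Local Notation e := (evec i).
Definition Yi (t : nat) (om : Omega) : bool := xi t om && (u t om == e).

Lemma Yi_hist r s : (0 < r)%N -> (r <= s)%N -> H s [set om | Yi r om].
Proof.
move=> r0 rs.
rewrite (_ : [set om | Yi r om] = [set om | xi r om] `&` u r @^-1` [set e]); last first.
  apply/seteqP; split=> om /=; rewrite /Yi.
    by case/andP=> -> /eqP.
  by case=> -> ->; rewrite eqxx.
have h1 : H s [set om | xi r om].
  by apply: (@hist_mono r.-1); [exact: leq_trans (leq_pred r) rs| case: (hxi _ r0)].
have h2 : H s (u r @^-1` [set e]).
  by apply: sub_sigma_algebra; exists r; split=> //; right; right; left; exists [set e].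
exact: (@measurableI _ (g_sigma_algebraType (hist_gen x w u dd s)) _ _ h1 h2).
Qed.

Definition Ev s a b := [set om | csum Yi s om = a /\ csum xi s om = b].

Lemma Ev_hist s a b : H s (Ev s a b).
Proof.
have m1 : measurable [set om : g_sigma_algebraType (hist_gen x w u dd s) | csum Yi s om = a].
  by apply: csum_meas => r r0 rs; exact: Yi_hist.
have m2 : measurable [set om : g_sigma_algebraType (hist_gen x w u dd s) | csum xi s om = b].
  apply: csum_meas => r r0 rs.
  by apply: (@hist_mono r.-1); [exact: leq_trans (leq_pred r) rs| case: (hxi _ r0)].
exact: (measurableI _ _ m1 m2).
Qed.

Lemma Ev_meas s a b : measurable (Ev s a b).
Proof. exact: hist_meas (Ev_hist s a b). Qed.

Lemma Ev_empty s a b : (s < a)%N \/ (s < b)%N -> Ev s a b = set0.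
Proof.
move=> h; apply/seteqP; split=> om //= [ha hb].
case: h => h.
  by have := csum_le Yi s om; rewrite ha leqNgt h.
by have := csum_le xi s om; rewrite hb leqNgt h.
Qed.


Definition pu : R := (#|Uset M|%:R)^-1.

Lemma evec_U : e \in Uset M.
Proof.
rewrite inE (@eq_card _ _ (pred1 i)) ?card1 // => j.
by rewrite !inE /= ffunE.
Qed.

Lemma step_prob s A : H s A ->
  pr P (A `&` [set om | xi s.+1 om] `&` [set om | u s.+1 om == e]) =
  pu * pr P (A `&` [set om | xi s.+1 om]).
Proof.
move=> HA; have [_ h] := hxi _ (ltn0Sn s); have := h A e HA evec_U.
rewrite (_ : u s.+1 @^-1` [set e] = [set om | u s.+1 om == e]); last first.
  by apply/seteqP; split=> om /=; [move=> ->; rewrite eqxx| move/eqP].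
have mA := @hist_meas s A HA.
have mX := @xi_meas s.+1 (ltn0Sn s).
have hAX := @prE _ _ _ P _ (measurableI _ _ mA mX).
move=> h'; rewrite [in LHS]/pr h' hAX -EFinM /=.
by rewrite mulrC.
Qed.

Variables lam c : R.
Hypothesis hc : expR c * (1 - pu + pu * expR (- lam)) = 1.

Definition hw8 (a b : nat) : R := expR (c * b%:R - lam * a%:R).

Lemma hrec a b : hw8 a b.+1 * (1 - pu) + hw8 a.+1 b.+1 * pu = hw8 a b.
Proof.
have e1 : hw8 a b.+1 = hw8 a b * expR c.
  by rewrite /hw8 -expRD; congr expR; rewrite -[b.+1]addn1 natrD; ring.
have e2 : hw8 a.+1 b.+1 = hw8 a b * expR c * expR (- lam).
  by rewrite /hw8 -!expRD; congr expR; rewrite -[a.+1]addn1 -[b.+1]addn1 !natrD; ring.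
rewrite e1 e2.
transitivity (hw8 a b * (expR c * (1 - pu + pu * expR (- lam)))); first ring.
by rewrite hc mulr1.
Qed.

Definition L s := \sum_(0 <= a < s.+1) \sum_(0 <= b < s.+1) hw8 a b * pr P (Ev s a b).

Lemma L0 : L 0 = 1.
Proof.
rewrite /L !big_nat1 /hw8 !mulr0 subr0 expR0 mul1r.
rewrite (_ : Ev 0 0 0 = setT) ?prT //.
by apply/seteqP; split=> om // _; split; exact: csum0.
Qed.

Local Notation Xs s := [set om | xi s.+1 om].
Local Notation E1s s := [set om | u s.+1 om == e].

Lemma E1_meas s : measurable (E1s s).
Proof.
rewrite (_ : E1s s = u s.+1 @^-1` [set e]); first exact: hu.
by apply/seteqP; split=> om /=; [move/eqP| move=> ->; rewrite eqxx].
Qed.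

Lemma L_step s : L s.+1 = L s.
Proof.
have mX : measurable (Xs s) := @xi_meas s.+1 (ltn0Sn s).
have mE1 := E1_meas s.
pose f1 a b := pr P (Ev s a b `&` ~` Xs s).
pose f2 a b := pr P (Ev s a b `&` Xs s `&` ~` E1s s).
pose f3 a b := pr P (Ev s a b `&` Xs s `&` E1s s).
have cY : forall om, csum Yi s.+1 om = (csum Yi s om + Yi s.+1 om)%N.
  by move=> om; exact: csumS.
have cZ : forall om, csum xi s.+1 om = (csum xi s om + xi s.+1 om)%N.
  by move=> om; exact: csumS.
have hEv : forall a b, pr P (Ev s.+1 a b) = f1 a b +
    (if b is b'.+1 then f2 a b' else 0) +
    (if a is a'.+1 then (if b is b'.+1 then f3 a' b' else 0) else 0).
  move=> a b.
  rewrite (@pr_split _ _ _ P (Ev s.+1 a b) (Xs s) (Ev_meas _ _ _) mX).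
  rewrite (@pr_split _ _ _ P (Ev s.+1 a b `&` Xs s) (E1s s)
     (measurableI _ _ (Ev_meas _ _ _) mX) mE1).
  have -> : Ev s.+1 a b `&` ~` Xs s = Ev s a b `&` ~` Xs s.
    apply/seteqP; split=> om /=; rewrite /Ev /= cY cZ /Yi;
    case: (xi s.+1 om); case: (u s.+1 om == e); rewrite /= ?addn0 ?addn1;
    intuition congruence.
  have -> : pr P (Ev s.+1 a b `&` Xs s `&` ~` E1s s) =
      (if b is b'.+1 then f2 a b' else 0).
    case: b => [|b].
      rewrite (_ : _ `&` _ = set0) ?pr0 //.
      apply/seteqP; split=> om //=; rewrite /Ev /= cY cZ /Yi;
      case: (xi s.+1 om); case: (u s.+1 om == e); rewrite /= ?addn0 ?addn1;
      intuition congruence.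
    rewrite /f2; congr pr.
    apply/seteqP; split=> om /=; rewrite /Ev /= cY cZ /Yi;
    case: (xi s.+1 om); case: (u s.+1 om == e); rewrite /= ?addn0 ?addn1;
    intuition congruence.
  have -> : pr P (Ev s.+1 a b `&` Xs s `&` E1s s) =
      (if a is a'.+1 then (if b is b'.+1 then f3 a' b' else 0) else 0).
    case: a => [|a]; [|case: b => [|b]].
    - rewrite (_ : _ `&` _ = set0) ?pr0 //.
      apply/seteqP; split=> om //=; rewrite /Ev /= cY cZ /Yi;
      case: (xi s.+1 om); case: (u s.+1 om == e); rewrite /= ?addn0 ?addn1;
      intuition congruence.
    - rewrite (_ : _ `&` _ = set0) ?pr0 //.
      apply/seteqP; split=> om //=; rewrite /Ev /= cY cZ /Yi;
      case: (xi s.+1 om); case: (u s.+1 om == e); rewrite /= ?addn0 ?addn1;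
      intuition congruence.
    rewrite /f3; congr pr.
    apply/seteqP; split=> om /=; rewrite /Ev /= cY cZ /Yi;
    case: (xi s.+1 om); case: (u s.+1 om == e); rewrite /= ?addn0 ?addn1;
    intuition congruence.
  rewrite /f1; set m3 := (match a with 0%N => _ | _.+1 => _ end); set m2 := (match b with 0%N => _ | _.+1 => _ end); ring.
have T1 : \sum_(0 <= a < s.+2) \sum_(0 <= b < s.+2) hw8 a b * f1 a b =
    \sum_(0 <= a < s.+1) \sum_(0 <= b < s.+1) hw8 a b * f1 a b.
  rewrite big_nat_recr //= [X in _ + X = _]big1 ?addr0; last first.
    by move=> b _; rewrite /f1 (@Ev_empty s s.+1 b (or_introl (ltnSn s))) set0I pr0 mulr0.
  apply: eq_bigr => a _; rewrite big_nat_recr //=.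
  by rewrite /f1 (@Ev_empty s a s.+1 (or_intror (ltnSn s))) set0I pr0 mulr0 addr0.
have T2 : \sum_(0 <= a < s.+2) \sum_(0 <= b < s.+2)
      hw8 a b * (if b is b'.+1 then f2 a b' else 0) =
    \sum_(0 <= a < s.+1) \sum_(0 <= b < s.+1) hw8 a b.+1 * f2 a b.
  have inner : forall a, \sum_(0 <= b < s.+2)
      hw8 a b * (if b is b'.+1 then f2 a b' else 0) =
      \sum_(0 <= b < s.+1) hw8 a b.+1 * f2 a b.
    by move=> a; rewrite big_nat_recl //= mulr0 add0r.
  rewrite (eq_bigr _ (fun a _ => inner a)) big_nat_recr //= [X in _ + X = _]big1 ?addr0 //.
  by move=> b _; rewrite /f2 (@Ev_empty s s.+1 b (or_introl (ltnSn s))) !set0I pr0 mulr0.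
have T3 : \sum_(0 <= a < s.+2) \sum_(0 <= b < s.+2)
      hw8 a b * (if a is a'.+1 then (if b is b'.+1 then f3 a' b' else 0) else 0) =
    \sum_(0 <= a < s.+1) \sum_(0 <= b < s.+1) hw8 a.+1 b.+1 * f3 a b.
  rewrite big_nat_recl //= [X in X + _ = _]big1 ?add0r; last by move=> b _; rewrite mulr0.
  by apply: eq_bigr => a _; rewrite big_nat_recl //= mulr0 add0r.
have E : L s.+1 =
    \sum_(0 <= a < s.+2) \sum_(0 <= b < s.+2) hw8 a b * f1 a b +
    \sum_(0 <= a < s.+2) \sum_(0 <= b < s.+2)
      hw8 a b * (if b is b'.+1 then f2 a b' else 0) +
    \sum_(0 <= a < s.+2) \sum_(0 <= b < s.+2)
      hw8 a b * (if a is a'.+1 then (if b is b'.+1 then f3 a' b' else 0) else 0).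
  rewrite /L -!big_split; apply: eq_bigr => a _; rewrite -!big_split.
  apply: eq_bigr => b _ /=; rewrite hEv; set m3 := (match a with 0%N => _ | _.+1 => _ end); set m2 := (match b with 0%N => _ | _.+1 => _ end); ring.
rewrite E T1 T2 T3 /L -!big_split; apply: eq_bigr => a _; rewrite -!big_split.
apply: eq_bigr => b _ /=.
have hf3 : f3 a b = pu * pr P (Ev s a b `&` Xs s) := @step_prob s _ (Ev_hist s a b).
have hsplit2 := @pr_split _ _ _ P (Ev s a b `&` Xs s) (E1s s)
     (measurableI _ _ (Ev_meas _ _ _) mX) mE1.
have hf2 : f2 a b = (1 - pu) * pr P (Ev s a b `&` Xs s).
  rewrite mulrBl mul1r -hf3 hsplit2 /f2 /f3; ring.
have hsplit := @pr_split _ _ _ P (Ev s a b) (Xs s) (Ev_meas _ _ _) mX.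
rewrite hf2 hf3 hsplit.
transitivity (hw8 a b * f1 a b + (hw8 a b.+1 * (1 - pu) + hw8 a.+1 b.+1 * pu) *
   pr P (Ev s a b `&` Xs s)); first ring.
by rewrite hrec /f1; ring.
Qed.

Lemma L_one s : L s = 1.
Proof. by elim: s => [|s IH]; [exact: L0| rewrite L_step]. Qed.

Lemma Yi_meas r : (0 < r)%N -> measurable [set om | Yi r om].
Proof. by move=> r0; apply: (@hist_meas r); exact: Yi_hist. Qed.

Lemma cY_fib t a : measurable [set om | csum Yi t om = a].
Proof. by apply: csum_meas => r r0 _; exact: Yi_meas. Qed.

Lemma cZ_fib t a : measurable [set om | csum xi t om = a].
Proof. by apply: csum_meas => r r0 _; exact: xi_meas. Qed.

Lemma markov_S T0 (Aa nr : R) : 0 <= lam -> 0 <= c ->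
  pr P [set om | (csum Yi T0 om)%:R <= Aa /\ nr <= (csum xi T0 om)%:R] <=
  expR (lam * Aa - c * nr).
Proof.
move=> lam0 c0.
set S := [set om | _ /\ _].
have mS : measurable S.
  rewrite (_ : S = (csum Yi T0) @^-1` [set a : nat | a%:R <= Aa] `&`
                   (csum xi T0) @^-1` [set b : nat | nr <= b%:R]) //.
  apply: measurableI; apply: preim_nat_meas => a; [exact: cY_fib| exact: cZ_fib].
have part : pr P S =
    \sum_(0 <= a < T0.+1) \sum_(0 <= b < T0.+1) pr P (S `&` Ev T0 a b).
  rewrite (pr_partition P (csum Yi T0) T0.+1 S mS (cY_fib T0)); last first.
    by move=> om; rewrite ltnS csum_le.
  apply: eq_bigr => a _.
  rewrite (pr_partition P (csum xi T0) T0.+1 _ (measurableI _ _ mS (cY_fib T0 a)) (cZ_fib T0)); last first.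
    by move=> om; rewrite ltnS csum_le.
  apply: eq_bigr => b _; congr pr; apply/seteqP; split=> om /=; rewrite /Ev /=; tauto.
set kap := expR (c * nr - lam * Aa).
have kap0 : 0 < kap by exact: expR_gt0.
have key : kap * pr P S <= 1.
  rewrite -(L_one T0) part /L big_distrr /=; apply: ler_sum => a _.
  rewrite big_distrr /=; apply: ler_sum => b _.
  have [cond|ncond] := boolP ((a%:R <= Aa) && (nr <= b%:R)).
    move/andP: cond => [ca cb].
    have -> : S `&` Ev T0 a b = Ev T0 a b.
      apply/seteqP; split=> om /=; first by case.
      by rewrite /Ev /= => -[ha hb]; split=> //; rewrite /S /= ha hb.
    apply: ler_wpM2r; first exact: pr_ge0.
    rewrite /kap /hw8 ler_expR; apply: lerB.
      by apply: ler_wpM2l.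
    by apply: ler_wpM2l.
  have -> : S `&` Ev T0 a b = set0.
    apply/seteqP; split=> om //=; rewrite /S /Ev /= => -[[h1 h2] [ha hb]].
    by move: ncond; rewrite -ha -hb h1 h2.
  rewrite pr0 mulr0; apply: mulr_ge0; [exact: ltW (expR_gt0 _)| exact: pr_ge0].
have -> : expR (lam * Aa - c * nr) = kap^-1.
  by rewrite /kap -expRN; congr expR; ring.
rewrite -(ler_pM2l kap0) mulrV ?unitfE ?gt_eqF //.
Qed.

End Model.


Lemma Uset_card M : (0 < M)%N -> (0 < #|Uset M|)%N /\ (#|Uset M| <= M.+1)%N.
Proof.
move=> M0; split.
  apply/card_gt0P; exists [ffun=> false]; rewrite inE.
  by rewrite (@eq_card0 _ [pred j | ([ffun=> false] : bvec M) j]) // => j; rewrite !inE ffunE.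
have sub : Uset M \subset ([set [ffun=> false] : bvec M] :|: [set evec j | j in 'I_M])%SET.
  apply/fintype.subsetP => v; rewrite inE => hv.
  rewrite inE; apply/orP.
  case: (pickP [pred j | v j]) => [j vj|none].
    right; apply/imsetP; exists j => //.
    apply/ffunP => j'; rewrite ffunE.
    case vj': (v j').
      have := (card_le1_eqP hv) j' j.
      by rewrite !inE vj' => /(_ isT vj) ->; rewrite eqxx.
    by case: eqP => // ej; move: vj; rewrite /= -ej vj'.
  left; rewrite inE; apply/eqP/ffunP => j; rewrite ffunE.
  exact: none j.
have := subset_leq_card sub; move/leq_trans; apply.
rewrite cardsU cards1 addnC (leq_trans (leq_subr _ _)) // addn1 ltnS.
by rewrite (leq_trans (leq_imset_card _ _)) // card_ord.
Qed.

Lemma csum_step {T : Type} (Z : nat -> T -> bool) k q om :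
  csum Z (q.+1 * k) om =
  (csum Z (q * k) om + \sum_((q * k).+1 <= t < q * k + k + 1) (Z t om : nat))%N.
Proof.
rewrite /csum mulSnr addn1 (@big_cat_nat _ _ _ (q * k).+1) //.
by rewrite ltnS leq_addr.
Qed.

Lemma csum_mono {T : Type} (Z : nat -> T -> bool) t n om :
  (csum Z t om <= csum Z (t + n) om)%N.
Proof.
elim: n => [|n IH]; first by rewrite addn0.
by rewrite addnS csumS (leq_trans IH) // leq_addr.
Qed.

Lemma blocks_lb {R : realType} {T : Type} (Z : nat -> T -> bool) k (r : R) om :
  (forall j, (Num.ceil (r * k%:R) <=
       (\sum_(j.+1 <= t < j + k + 1) (Z t om : nat))%N%:Z)%R) ->
  forall q, q%:R * (r * k%:R) <= (csum Z (q * k) om)%:R.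
Proof.
move=> hb; elim=> [|q IH]; first by rewrite mul0r mul0n csum0.
rewrite csum_step natrD -[q.+1]addn1 natrD mulrDl mul1r; apply: lerD => //.
apply: le_trans (ceil_ge _) _.
have := hb (q * k)%N; rewrite -(ler_int R) => h; exact: h.
Qed.


Lemma sum_const_seq {R : realType} {I : Type} (s : seq I) (x : R) :
  \sum_(i <- s) x = (size s)%:R * x.
Proof.
elim: s => [|a s IH]; first by rewrite big_nil mul0r.
by rewrite big_cons IH /= -natr1 mulrDl mul1r addrC.
Qed.

Theorem mainTheorem14 (R : realType) (d : measure_display)
    (Omega : measurableType d) (P : probability Omega R) (M : nat)
    (x w : nat -> Omega -> R) (u dd : nat -> Omega -> bvec M)
    (xi : nat -> Omega -> bool) (r : R) (k T : nat) (delta : R) :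
  (1 <= M)%N ->
  (forall n, measurable_fun setT (x n)) ->
  (forall n, measurable_fun setT (w n)) ->
  (forall n (v : bvec M), measurable (u n @^-1` [set v])) ->
  (forall n (v : bvec M), measurable (dd n @^-1` [set v])) ->
  (forall n om, u n om \in Uset M) ->
  0 < r -> r <= 1 -> (0 < k)%N ->
  exploratory P x w u dd xi r k ->
  0 < delta -> delta < 1 ->
  k%:R + 8 / r * (M%:R + 1) * ln (M%:R / delta) <= T%:R ->
  ((1 - delta)%:E <= P (E_N u r T k))%E.
Proof.
move=> M1 hx hw hu hdd hU r0 r1 k0 [hxi hae] d0 d1 hT.
have [U0 U1] := @Uset_card M M1.
have pu_pos : 0 < pu R M by rewrite /pu invr_gt0 ltr0n.
have pu_le1 : pu R M <= 1 by rewrite /pu invf_le1 ?ltr0n // ler1n.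
have puK : 1 <= pu R M * (M%:R + 1).
  by rewrite /pu mulrC ler_pdivlMr ?ltr0n // mul1r natr1 ler_nat.
set lam : R := 3 / 5.
set qq := expR (- lam).
have qq0 : 0 < qq by exact: expR_gt0.
have hqq : qq <= 23 / 40.
  have e1 : 23 / 20 <= expR (3 / 20 : R) by have := expR_ge1Dx (3 / 20 : R); lra.
  have e4 : expR lam = expR (3 / 20 : R) ^+ 4.
    by rewrite -expRM_natl; congr expR; rewrite /lam; lra.
  have eY : 40 / 23 <= expR lam.
    rewrite e4; move: e1; set y := expR (3 / 20 : R) => e1.
    have z0 : (0 : R) <= 23 / 20 by lra.
    have y2 := ler_pM z0 z0 e1 e1.
    have z1 : (0 : R) <= 23 / 20 * (23 / 20) by lra.
    have y4 := ler_pM z1 z1 y2 y2.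
    have -> : y ^+ 4 = (y * y) * (y * y) by rewrite !exprS expr0; ring.
    lra.
  have qY : qq * expR lam = 1 by rewrite /qq -expRD addNr expR0.
  have h := ler_wpM2l (ltW qq0) eY; rewrite qY in h; lra.
set y := 1 - pu R M + pu R M * qq.
have y0 : 0 < y by rewrite /y; nra.
have y1 : y <= 1 by rewrite /y; nra.
set c := - ln y.
have hc : expR c * (1 - pu R M + pu R M * expR (- lam)) = 1.
  by rewrite -/qq -/y /c expRN lnK ?posrE // mulVf ?gt_eqF.
have c0 : 0 <= c by rewrite /c oppr_ge0 ln_le0.
have hc2 : pu R M * (1 - qq) <= c.
  have : expR (- c) <= expR (- (pu R M * (1 - qq))).
    rewrite /c opprK lnK ?posrE //.
    by apply: le_trans (expR_ge1Dx _); rewrite /y; lra.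
  rewrite ler_expR; lra.
set K : R := M%:R + 1.
have M0 : (0 : R) <= M%:R by rewrite ler0n.
have K0 : 0 < K by rewrite /K; lra.
set Lg := ln (M%:R / delta).
have Lg0 : 0 < Lg.
  apply: ln_gt0; rewrite ltr_pdivlMr // mul1r.
  by apply: lt_le_trans d1 _; rewrite ler1n.
set nr := r * (T%:R - k%:R).
set Aa := r * (T%:R - k%:R) / (2 * (M%:R + 1)).
have m8 : 8 * Lg <= nr / K.
  have h1 : 8 / r * K * Lg <= T%:R - k%:R by rewrite /K /Lg; lra.
  have -> : 8 * Lg = (8 / r * K * Lg) * (r / K).
    by field; apply/andP; split; rewrite gt_eqF.
  have e : (T%:R - k%:R) * (r / K) = nr / K.
    by rewrite /nr; field; rewrite gt_eqF.
  rewrite -e; apply: ler_wpM2r => //; apply: divr_ge0; exact: ltW.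
have nr0 : 0 <= nr.
  have : 0 <= nr / K by apply: le_trans m8; rewrite mulr_ge0 // ltW.
  by rewrite pmulr_lge0 // invr_gt0.
have expo : lam * Aa - c * nr <= - Lg.
  set m := nr / K.
  have hA : Aa = m / 2 by rewrite /Aa /m /nr /K; field; rewrite gt_eqF.
  have hn : nr = m * K by rewrite /m; field; rewrite gt_eqF.
  have m0 : 0 <= m by rewrite /m divr_ge0 // ltW.
  have F1 : pu R M * (1 - qq) * nr <= c * nr by apply: ler_wpM2r.
  have F2 : (1 - qq) * m <= pu R M * (1 - qq) * nr.
    rewrite hn; have -> : pu R M * (1 - qq) * (m * K) = (pu R M * K) * ((1 - qq) * m) by ring.
    by rewrite ler_peMl // mulr_ge0 //; lra.
  have F3 : 17 / 40 * m <= (1 - qq) * m by apply: ler_wpM2r => //; lra.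
  move: m8; rewrite -/m => m8; rewrite hA /lam; lra.
have bnd : expR (lam * Aa - c * nr) <= delta / M%:R.
  apply: le_trans (_ : expR (- Lg) <= _).
    by rewrite ler_expR.
  by rewrite expRN /Lg lnK ?posrE ?divr_gt0 ?ltr0n // invf_div.
have [N [mN PN subN]] := ae_foralln hae.
pose bad (i : 'I_M) := [set om | (Ncount u T i om)%:R <= Aa].
have mbad : forall i, measurable (bad i).
  move=> i; apply: (@preim_nat_meas _ _ (fun om => Ncount u T i om) [set a | a%:R <= Aa]) => a.
  apply: (@csum_meas _ _ (fun t om => u t om == evec i) T) => s _ _.
  rewrite (_ : [set om | _] = u s @^-1` [set evec i]); first exact: hu.
  apply/seteqP; split=> om /=; first by move/eqP.
  by move=> ->; rewrite eqxx.
have lam0 : 0 <= lam by rewrite /lam; lra.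
have hbad : forall i, pr P (bad i) <= delta / M%:R.
  move=> i.
  set S := [set om | (csum (Yi d Omega M u xi i) T om)%:R <= Aa /\ nr <= (csum xi T om)%:R].
  have mS : measurable S.
    rewrite (_ : S = (csum (Yi d Omega M u xi i) T) @^-1` [set a : nat | a%:R <= Aa] `&`
                     (csum xi T) @^-1` [set b : nat | nr <= b%:R]) //.
    apply: measurableI; apply: preim_nat_meas => a.
      exact: (cY_fib _ _ _ _ _ _ _ _ _ _ hx hw hu hdd hxi i T a).
    exact: (cZ_fib _ _ _ _ _ _ _ _ _ _ hx hw hu hdd hxi T a).
  have sub : bad i `<=` S `|` N.
    move=> om /= hb; case: (pselect (N om)) => [Nom|nN]; [by right | left].
    have Gom : forall j, (Num.ceil (r * k%:R) <=
        (\sum_(j.+1 <= t < j + k + 1) (xi t om : nat))%N%:Z)%R.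
      by apply: contrapT => nG; apply: nN; exact: subN nG.
    split.
      apply: le_trans hb; rewrite ler_nat /csum /Ncount; apply: leq_sum => t _.
      by rewrite /Yi; case: (xi t om).
    set q := (T %/ k)%N.
    have hq := ltn_ceil T k0.
    have h1 : nr <= q%:R * (r * k%:R).
      have hTq : T%:R <= q%:R * k%:R + k%:R :> R.
        by rewrite -natrM -natrD ler_nat -mulSnr ltnW.
      rewrite /nr mulrCA; apply: ler_wpM2l; [exact: ltW | lra].
    apply: le_trans h1 _; apply: le_trans (blocks_lb _ _ _ _ Gom q) _.
    rewrite ler_nat.
    have := csum_mono xi (q * k) (T - q * k) om; rewrite subnKC //; exact: leq_trunc_div.
  have prN : pr P N = 0 by rewrite /pr PN.
  apply: le_trans (pr_le P _ _ (mbad i) (measurableU _ _ mS mN) sub) _.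
  apply: le_trans (pr_subU P _ _ mS mN) _; rewrite prN addr0.
  apply: le_trans bnd.
  exact: (markov_S _ _ _ _ _ _ _ _ _ _ hx hw hu hdd hxi i lam c hc T Aa nr lam0 c0).
have [mU prU] := @pr_union_le _ _ _ P _ (enum 'I_M) bad mbad.
set U := [set om | exists2 i, i \in enum 'I_M & bad i om].
have hsum : \sum_(i <- enum 'I_M) pr P (bad i) <= delta.
  apply: le_trans (_ : \sum_(i <- enum 'I_M) (delta / M%:R) <= _).
    by apply: ler_sum => i _; exact: hbad.
  rewrite sum_const_seq size_enum_ord.
  have -> : M%:R * (delta / M%:R) = delta.
    by field; rewrite pnatr_eq0 -lt0n.
  by [].
have EN : E_N u r T k = ~` U.
  apply/seteqP; split=> om /=.
    move=> hall [i _ hb]; have := hall i; rewrite ltNge.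
    by move: hb; rewrite /bad /= => ->.
  move=> nU i; rewrite ltNge; apply/negP => hb; apply: nU; exists i => //.
  by rewrite mem_enum.
rewrite EN (prE P _ (measurableC mU)) lee_fin pr_compl //; lra.
Qed.
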